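(* Let $q=p^\ell$ be a prime power with $p$ prime and $d$ a positive integer; write $d+1=s(q-q/p)+r$ with integers $s\ge0$, $0\le r<q-q/p$. Let $k\ge s+1$ and define $e^\star\in\{0,\dots,q-1\}^k$ by $e^\star_i=q-q/p$ for $1\le i\le s$, $e^\star_{s+1}=q-1$, and $e^\star_j=0$ for $j\ge s+2$; let $d^\star=|e^\star|_1$. Then for every function $g:\mathbb{F}_q^k\to\mathbb{F}_q$ of degree at most $d^\star-1$, $$\Pr_{\alpha\in\mathbb{F}_q^k}\left[g(\alpha)\neq\alpha^{e^\star}\right]\geq\frac{1}{q^{s+1}},$$ where $\alpha$ is uniform in $\mathbb{F}_q^k$.
   Context: For $\alpha\in\mathbb{F}_q^k$ and $e\in\{0,\dots,q-1\}^k$, $\alpha^e=\prod_i\alpha_i^{e_i}$ (with $0^0=1$). The degree of a function $\mathbb{F}_q^k\to\mathbb{F}_q$ is the total degree of its unique polynomial representation with individual degrees at most $q-1$. *)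

(* Defs.v *)
From HB Require Import structures.
From mathcomp Require Import all_boot all_order all_algebra.
Set Implicit Arguments. Unset Strict Implicit. Unset Printing Implicit Defensive.
Import Order.TTheory GRing.Theory Num.Theory.
Local Open Scope ring_scope.

(* alpha^e = prod_i alpha_i^{e_i}  (with 0^0 = 1, since x ^+ 0 = 1) *)
Definition monom (F : finFieldType) (k : nat) (e : 'I_k -> nat)
  (a : {ffun 'I_k -> F}) : F := \prod_(i < k) a i ^+ e i.

Definition l1 (k : nat) (e : 'I_k -> nat) : nat := (\sum_(i < k) e i)%N.

(* g : F^k -> F has degree at most D: its (unique) polynomial representation
   with individual degrees at most q-1 (exponent vectors in {0..q-1}^k,
   encoded as 'I_k -> 'I_q) has total degree at most D, i.e. g is a linear
   combination of monomials alpha^e with e in {0..q-1}^k and |e|_1 <= D. *)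
Definition deg_le (F : finFieldType) (k : nat) (g : {ffun 'I_k -> F} -> F)
  (D : nat) : Prop :=
  exists c : {ffun 'I_k -> 'I_#|F|} -> F,
    (forall e : {ffun 'I_k -> 'I_#|F|}, (D < l1 (fun i => nat_of_ord (e i)))%N -> c e = 0) /\
    forall a, g a = \sum_(e : {ffun 'I_k -> 'I_#|F|})
                      c e * monom (fun i => nat_of_ord (e i)) a.

(* the exponent vector e^star (0-indexed: coordinates 0..s-1 get q - q/p,
   coordinate s gets q-1, the rest 0) *)
Definition estar (q p s k : nat) (i : 'I_k) : nat :=
  if (i < s)%N then (q - q %/ p)%N else if i == s :> nat then q.-1 else 0%N.

(* Main.v *)
Require Import Defs.
From HB Require Import structures.
From mathcomp Require Import all_boot all_order all_algebra all_field.
From mathcomp Require Import zify.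
Set Implicit Arguments. Unset Strict Implicit. Unset Printing Implicit Defensive.
Import Order.TTheory GRing.Theory Num.Theory.
Local Open Scope ring_scope.

Lemma unit_pow (F : finFieldType) (y : F) : y != 0 -> y ^+ #|F|.-1 = 1.
Proof.
move=> ynz; have := expf_card y.
rewrite -(ltn_predK (finNzRing_gt1 F)) exprS => h.
by apply: (mulfI ynz); rewrite mulr1.
Qed.

Lemma psum_mid (F : finFieldType) t : (0 < t < #|F|.-1)%N ->
  \sum_(y : F) y ^+ t = 0.
Proof.
move=> /andP[t0 tq].
have /existsP[a /andP[anz at1]] : [exists a : F, (a != 0) && (a ^+ t != 1)].
  apply: contraTT tq; rewrite negb_exists => /forallP H.
  rewrite -leqNgt.
  have -> : #|F|.-1 = size (enum [pred y : F | y != 0]).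
    by rewrite -cardE cardC1.
  apply: max_unity_roots => //; last exact: enum_uniq.
  apply/allP => y; rewrite mem_enum inE => ynz.
  have := H y; rewrite ynz /= negbK => /eqP ht.
  by rewrite unity_rootE ht.
have := reindex_inj (mulfI anz) (F := fun y => y ^+ t) (P := xpredT) (op := +%R) (x := 0).
under [X in _ = X]eq_bigr do rewrite exprMn.
rewrite -mulr_sumr => h.
have : (a ^+ t - 1) * \sum_(y : F) y ^+ t = 0 by rewrite mulrBl -h /= mul1r subrr.
by move/eqP; rewrite mulf_eq0 subr_eq0 (negPf at1) /= => /eqP.
Qed.

Lemma psum (F : finFieldType) t : (#|F|%:R = 0 :> F) -> (t < 2 * #|F|.-1)%N ->
  \sum_(y : F) y ^+ t = if t == #|F|.-1 then -1 else 0.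
Proof.
move=> qz tlt.
have q1gt : (0 < #|F|.-1)%N by have := finNzRing_gt1 F; lia.
have sum1 : \sum_(y : F) (1 : F) = 0.
  by rewrite sumr_const cardT -cardE.
case: (ltngtP t #|F|.-1) => ht.
- case: t ht {tlt} => [|t] ht.
    by under eq_bigr do rewrite expr0.
  by apply: psum_mid; rewrite ht.
- idtac.
  transitivity (\sum_(y : F) y ^+ (t - #|F|.-1)).
    apply: eq_bigr => y _; have [->|ynz] := eqVneq y 0.
      by rewrite !expr0n subn_eq0 leqNgt ht (gtn_eqF (ltn_trans q1gt ht)).
      by rewrite -{1}(subnK (ltnW ht)) exprD unit_pow // mulr1.
  by apply: psum_mid; lia.
- rewrite ht (bigD1 0) //= expr0n (gtn_eqF q1gt) add0r.
  under eq_bigr => y ynz do rewrite (unit_pow ynz).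
  by move: sum1; rewrite (bigD1 0) //= addrC => /eqP; rewrite addr_eq0 => /eqP.
Qed.

Lemma prod_sum_distr (F : finFieldType) k (phi : 'I_k -> F -> F) (e : 'I_k -> nat) :
  \sum_(x : {ffun 'I_k -> F}) monom e x * \prod_i phi i (x i) =
  \prod_i \sum_(y : F) y ^+ e i * phi i y.
Proof.
rewrite bigA_distr_bigA; apply: eq_bigr => x _.
by rewrite /monom -big_split.
Qed.

Lemma key (F : finFieldType) k s (E W : 'I_k -> nat)
  (c : {ffun 'I_k -> 'I_#|F|} -> F) (g : {ffun 'I_k -> F} -> F) (b : {ffun 'I_k -> F}) :
  #|F|%:R = 0 :> F ->
  (forall i : 'I_k, (i <= s)%N -> E i + W i = #|F|.-1 /\ (W i < #|F|.-1)%N) ->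
  (forall i : 'I_k, (s < i)%N -> E i = 0%N) ->
  (forall e : {ffun 'I_k -> 'I_#|F|}, (l1 E <= l1 (fun i => nat_of_ord (e i)))%N -> c e = 0) ->
  (forall a, g a = \sum_(e : {ffun 'I_k -> 'I_#|F|}) c e * monom (fun i => nat_of_ord (e i)) a) ->
  [exists x : {ffun 'I_k -> F}, [forall i : 'I_k, (s < i)%N ==> (x i == b i)] && (g x != monom E x)].
Proof.
move=> qz hEW hE0 hc hg.
set B := [exists x : {ffun 'I_k -> F}, _].
have [//|/existsPn H] := boolP B.
pose phi (i : 'I_k) (y : F) := if (i <= s)%N then y ^+ W i else (y == b i)%:R.
pose P (e : 'I_k -> nat) := \prod_i \sum_(y : F) y ^+ e i * phi i y.
have fac_lo (e : 'I_k -> nat) (i : 'I_k) : (i <= s)%N -> (e i < #|F|)%N ->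
    \sum_(y : F) y ^+ e i * phi i y = if e i == E i then -1 else 0.
  move=> lis lt; rewrite /phi lis.
  under eq_bigr do rewrite -exprD.
  have [h1 h2] := hEW i lis.
  rewrite psum //; last by lia.
  have -> : (e i + W i == #|F|.-1) = (e i == E i) by apply/eqP/eqP; lia.
  by [].
have fac_hi (e : 'I_k -> nat) (i : 'I_k) : (s < i)%N -> \sum_(y : F) y ^+ e i * phi i y = b i ^+ e i.
  move=> lis; rewrite /phi leqNgt lis /=.
  rewrite (bigD1 (b i)) //= eqxx mulr1 big1 ?addr0 // => y /negPf ->.
  by rewrite mulr0.
have PE : P E != 0.
  apply/prodf_neq0 => i _; case: (leqP i s) => lis.
    rewrite fac_lo // ?eqxx ?oppr_eq0 ?oner_eq0 //.
    have [h1 h2] := hEW i lis; have := finNzRing_gt1 F; lia.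
  by rewrite fac_hi // hE0 // expr0 oner_eq0.
have Pe (e : {ffun 'I_k -> 'I_#|F|}) : c e * P (fun i => nat_of_ord (e i)) = 0.
  have [->|Pnz] := eqVneq (P (fun i => nat_of_ord (e i))) 0; first by rewrite mulr0.
  rewrite hc ?mul0r //; apply: leq_sum => i _.
  case: (leqP i s) => lis; last by rewrite hE0.
  move/prodf_neq0: Pnz => /(_ i isT); rewrite (fac_lo (fun j => nat_of_ord (e j)) i lis (ltn_ord _)) /=.
  by have [->|_] := eqVneq (nat_of_ord (e i)) (E i); rewrite ?leqnn // eqxx.
have S0 : \sum_(x : {ffun 'I_k -> F}) (monom E x - g x) * \prod_i phi i (x i) = 0.
  apply: big1 => x _.
  have [/forallP hx|] := boolP [forall i : 'I_k, (s < i)%N ==> (x i == b i)].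
    have := H x; rewrite negb_and negbK.
    have -> : [forall i : 'I_k, (s < i)%N ==> (x i == b i)] by apply/forallP.
    by move=> /= /eqP ->; rewrite subrr mul0r.
  rewrite negb_forall => /existsP [i]; rewrite negb_imply => /andP[lis xi].
  by rewrite (bigD1 i) //= /phi leqNgt lis /= (negPf xi) !mul0r mulr0.
move: S0; under eq_bigr do rewrite mulrBl; rewrite sumrB prod_sum_distr.
under [X in _ - X = _]eq_bigr do rewrite hg mulr_suml.
rewrite exchange_big /=.
under [X in _ - X = _]eq_bigr do under eq_bigr do rewrite -mulrA.
under [X in _ - X = _]eq_bigr do rewrite -mulr_sumr prod_sum_distr Pe.
by rewrite big1_eq subr0 => /eqP; rewrite (negPf PE).
Qed.

Lemma count_lemma (F : finFieldType) k s (Z : {set {ffun 'I_k -> F}}) :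
  (forall b : {ffun 'I_k -> F}, exists2 x, x \in Z & forall i : 'I_k, (s < i)%N -> x i = b i) ->
  (#|F| ^ k <= #|Z| * #|F| ^ s.+1)%N.
Proof.
move=> hZ.
pose D := [pred i : 'I_k | (s < i)%N].
pose proj (a : {ffun 'I_k -> F}) := [ffun i : 'I_k => if (s < i)%N then a i else 0].
have sub : pffun_on (0:F) D (predT : pred F) \subset proj @: Z.
  apply/subsetP => b /familyP hb; have [x xZ hx] := hZ b; apply/imsetP; exists x => //.
  apply/ffunP => i; rewrite ffunE; case: ifP => si; first by rewrite hx.
  by have := hb i; rewrite /= inE si /= => /eqP.
have le1 : (#|F| ^ #|D| <= #|Z|)%N.
  have := subset_leq_card sub; rewrite card_pffun_on => h.
  apply: leq_trans (leq_imset_card _ _).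
  apply: leq_trans h; rewrite leq_eqVlt; apply/orP; left; apply/eqP.
  by rewrite !cardE.
have le2 : (#|[predC D]| <= s.+1)%N.
  have := @leq_card_in _ _ (fun i : 'I_k => (inord i : 'I_s.+1)) [predC D].
  rewrite card_ord; apply => i j; rewrite !inE /= -!leqNgt => hi hj /(congr1 val).
  by rewrite /= !inordK //; move=> /val_inj.
have -> : (#|F| ^ k = #|F| ^ #|D| * #|F| ^ #|[predC D]|)%N by rewrite -expnD cardC card_ord.
apply: leq_mul => //.
by apply: leq_pexp2l => //; apply: (ltn_trans _ (finNzRing_gt1 F)).
Qed.

Theorem lemma4p2 (F : finFieldType) (p l d k : nat) :
  prime p -> #|F| = (p ^ l)%N -> (0 < d)%N ->
  let q := #|F| in
  let s := ((d + 1) %/ (q - q %/ p))%N in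
  let r := ((d + 1) %% (q - q %/ p))%N in
  (s + 1 <= k)%N ->
  let e := fun i : 'I_k => estar q p s i in
  let dstar := l1 e in
  forall g : {ffun 'I_k -> F} -> F,
    deg_le g dstar.-1 ->
    1 / (q ^ (s + 1))%:R <=
      (#|[set a : {ffun 'I_k -> F} | g a != monom e a]|%:R / (q ^ k)%:R : rat).
Proof.
move=> pp qF d0 q s r sk e dstar g [c [cdeg gdef]].
clearbody r s.
have q2 : (1 < q)%N := finNzRing_gt1 F.
have qz : q%:R = 0 :> F.
  case: l qF => [|l'] qF; first by move: q2; rewrite /q qF.
  by rewrite /q qF natrX (pcharf0 (card_finPcharP qF pp)) expr0n.
have [m hm [m1 mq]] : exists2 m : nat, (q %/ p)%N = m & (0 < m)%N /\ (m < q)%N.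
  case: l qF => [|l'] qF; first by move: q2; rewrite /q qF.
  exists (p ^ l')%N; first by rewrite /q qF expnS mulKn // prime_gt0.
  have m1 : (0 < p ^ l')%N by rewrite expn_gt0 prime_gt0.
  split=> //; rewrite /q qF expnS; apply: ltn_Pmull => //; exact: prime_gt1.
have sk' : (s < k)%N by rewrite -addn1.
have dpos : (0 < dstar)%N.
  rewrite /dstar /l1 (bigD1 (Ordinal sk')) //= /e /estar /= ltnn eqxx; lia.
set Z := [set a : {ffun 'I_k -> F} | g a != monom e a].
have hZ : forall b : {ffun 'I_k -> F}, exists2 x, x \in Z & forall i : 'I_k, (s < i)%N -> x i = b i.
  move=> b.
  have H1 : forall i : 'I_k, (i <= s)%N -> e i + (if (i < s)%N then (m - 1)%N else 0%N) = #|F|.-1 /\ ((if (i < s)%N then (m - 1)%N else 0%N) < #|F|.-1)%N.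
    move=> i lis; rewrite /e /estar hm; case: ltnP => h; first by lia.
    have -> : (i == s :> nat) by apply/eqP; lia.
    rewrite -/q; lia.
  have H2 : forall i : 'I_k, (s < i)%N -> e i = 0%N.
    move=> i lis; rewrite /e /estar; case: ltnP => h; first by lia.
    by have -> : (i == s :> nat) = false by apply/eqP; lia.
  have H3 : forall e' : {ffun 'I_k -> 'I_#|F|}, (l1 e <= l1 (fun i => nat_of_ord (e' i)))%N -> c e' = 0.
    move=> e' hle; apply: cdeg; rewrite -/dstar in hle; lia.
  have := @key F k s e (fun i : 'I_k => if (i < s)%N then (m - 1)%N else 0%N) c g b qz H1 H2 H3 gdef.
  case/existsP => x /andP[/forallP hx gx]; exists x; first by rewrite inE.
  by move=> i si; have := hx i; rewrite si => /eqP.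
have := count_lemma hZ => hcnt.
have qp n : (0 < (q ^ n)%:R :> rat) by rewrite ltr0n expn_gt0; lia.
rewrite ler_pdivlMr // mul1r ler_pdivrMl // -natrM ler_nat addn1 mulnC.
exact: hcnt.
Qed.
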